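(* (a) For $n\ge 0$: $a(n)=a(n+1)$ if and only if $n\in\{\lfloor \varphi^2 k\rfloor-1 : k\ge 1\}$. (b) For $n\ge 0$: $a(n)\ne a(n+1)$ if and only if $n\in\{\lfloor \varphi k+1/\varphi\rfloor : k\ge 0\}$. (c) For $n\ge 1$: $a(n)\notin\{a(n-1),a(n+1)\}$ if and only if $n\in\{\lfloor \varphi\lfloor \varphi^2 k\rfloor\rfloor : k\ge 1\}$.
   Context: $\varphi=(1+\sqrt5)/2$. Let $(F_n)_{n\ge 0}$ be the Fibonacci numbers: $F_0=0$, $F_1=1$, $F_n=F_{n-1}+F_{n-2}$ for $n\ge 2$. Define $(a(n))_{n\ge 0}$ (OEIS A105774) by $a(0)=0$, $a(1)=1$, and for $n\ge 2$, $a(n)=F_{j+1}-a(n-F_j)$, where $j\ge 2$ is the unique index with $F_j<n\le F_{j+1}$. *)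

(* Defs.v *)
From Stdlib Require Import Reals ZArith Arith.
Open Scope R_scope.

Fixpoint fib (n : nat) : nat :=
  match n with
  | O => O
  | S m => match m with O => 1%nat | S k => (fib m + fib k)%nat end
  end.

(* Search for the least j >= 2 with n <= F_(j+1); for n >= 2 this is the
   unique j >= 2 with F_j < n <= F_(j+1). Fuel n suffices since F_(j+1) >= j. *)
Fixpoint find_j (fuel j n : nat) : nat :=
  match fuel with
  | O => j
  | S f => if Nat.leb n (fib (S j)) then j else find_j f (S j) n
  end.

Definition fib_index (n : nat) : nat := find_j n 2 n.

Fixpoint a_aux (fuel n : nat) : Z :=
  match fuel with
  | O => 0%Z
  | S f =>
      match n with
      | O => 0%Z
      | S O => 1%Z
      | _ => let j := fib_index n in
             (Z.of_nat (fib (S j)) - a_aux f (n - fib j))%Z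
      end
  end.

(* OEIS A105774 *)
Definition a (n : nat) : Z := a_aux n n.

Definition phi : R := (1 + sqrt 5) / 2.

Definition floorR (x : R) : Z := Int_part x.

(* Main.v *)
Require Import Defs.
From Stdlib Require Import Reals ZArith Arith Lia Lra Psatz.
Open Scope R_scope.

Lemma fib_SS n : fib (S (S n)) = (fib (S n) + fib n)%nat.
Proof. reflexivity. Qed.

Lemma fib_le_S n : (fib n <= fib (S n))%nat.
Proof. destruct n. simpl; lia. rewrite fib_SS; lia. Qed.

Lemma fib_mono i j : (i <= j)%nat -> (fib i <= fib j)%nat.
Proof.
  induction 1. lia. pose proof (fib_le_S m). lia.
Qed.

Lemma fib_pos n : (1 <= n)%nat -> (1 <= fib n)%nat.
Proof.
  intros H. pose proof (fib_mono 1 n H). simpl in H0. lia.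
Qed.

Lemma fib_ge n : (S n <= fib (S (S n)))%nat.
Proof.
  induction n as [n IH] using lt_wf_ind.
  destruct n as [|[|n]]. simpl; lia. simpl; lia.
  rewrite fib_SS. pose proof (IH n ltac:(lia)). pose proof (IH (S n) ltac:(lia)). lia.
Qed.

Lemma fib_lt_S n : (2 <= n)%nat -> (fib n < fib (S n))%nat.
Proof.
  intros H. destruct n as [|[|n]]; try lia. rewrite (fib_SS (S n)).
  pose proof (fib_pos (S n) ltac:(lia)). lia.
Qed.

Lemma find_j_ge fuel j n : (j <= find_j fuel j n)%nat.
Proof.
  revert j; induction fuel; intros j; cbn [find_j]. lia.
  destruct (Nat.leb n (fib (S j))). lia. specialize (IHfuel (S j)); lia.
Qed.

Lemma find_j_spec fuel : forall j n jj, (j <= jj)%nat -> (jj <= j + fuel)%nat ->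
  (forall i, (j <= i)%nat -> (i < jj)%nat -> (fib (S i) < n)%nat) ->
  (n <= fib (S jj))%nat -> find_j fuel j n = jj.
Proof.
  induction fuel; intros j n jj H1 H2 H3 H4; cbn [find_j].
  - lia.
  - destruct (Nat.leb n (fib (S j))) eqn:E.
    + apply Nat.leb_le in E.
      destruct (Nat.eq_dec j jj). auto.
      specialize (H3 j ltac:(lia) ltac:(lia)). lia.
    + apply Nat.leb_gt in E.
      destruct (Nat.eq_dec j jj). subst. lia.
      apply IHfuel; try lia. intros i Hi1 Hi2. apply H3; lia.
Qed.

Lemma idx_spec n j : (2 <= j)%nat -> (fib j < n)%nat -> (n <= fib (S j))%nat ->
  fib_index n = j.
Proof.
  intros H1 H2 H3. unfold fib_index. apply find_j_spec; auto.
  - destruct j as [|j]. lia. pose proof (fib_ge (j - 1)).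
    replace (S (S (j-1))) with (S j) in H by lia. lia.
  - intros i Hi1 Hi2. pose proof (fib_mono (S i) j ltac:(lia)). lia.
Qed.

Lemma block_exists n : (2 <= n)%nat ->
  exists j, (2 <= j)%nat /\ (fib j < n)%nat /\ (n <= fib (S j))%nat.
Proof.
  induction n; intros H. lia.
  destruct (Nat.eq_dec n 1). subst. exists 2%nat. simpl. lia.
  destruct IHn as [j [J1 [J2 J3]]]. lia.
  destruct (Nat.eq_dec n (fib (S j))).
  - exists (S j). rewrite fib_SS. pose proof (fib_pos j). lia.
  - exists j. lia.
Qed.

Lemma aux_fuel f1 : forall f2 m, (m <= f1)%nat -> (m <= f2)%nat -> a_aux f1 m = a_aux f2 m.
Proof.
  induction f1; intros f2 m H1 H2.
  - destruct f2; simpl. reflexivity. assert (m = 0%nat) by lia. subst. reflexivity.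
  - destruct f2. assert (m = 0%nat) by lia. subst. reflexivity.
    destruct m as [|[|m]]. reflexivity. reflexivity.
    cbn [a_aux]. f_equal. apply IHf1.
    + pose proof (find_j_ge (S (S m)) 2 (S (S m))). unfold fib_index.
      pose proof (fib_pos (find_j (S (S m)) 2 (S (S m))) ltac:(lia)). lia.
    + pose proof (find_j_ge (S (S m)) 2 (S (S m))). unfold fib_index.
      pose proof (fib_pos (find_j (S (S m)) 2 (S (S m))) ltac:(lia)). lia.
Qed.

Lemma a_aux_SS f m : a_aux (S f) (S (S m)) =
  (Z.of_nat (fib (S (fib_index (S (S m))))) - a_aux f (S (S m) - fib (fib_index (S (S m)))))%Z.
Proof. reflexivity. Qed.

Lemma a_rec n j : (2 <= j)%nat -> (fib j < n)%nat -> (n <= fib (S j))%nat ->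
  a n = (Z.of_nat (fib (S j)) - a (n - fib j))%Z.
Proof.
  intros H1 H2 H3. pose proof (fib_pos j ltac:(lia)).
  destruct n as [|[|m]]; try lia. unfold a at 1. rewrite a_aux_SS.
  rewrite (idx_spec (S (S m)) j) by auto. f_equal. unfold a. apply aux_fuel; lia.
Qed.

Lemma a_bounds y : (1 <= y)%nat -> forall i, (y <= fib i)%nat ->
  (1 <= a y /\ a y <= Z.of_nat (fib i))%Z.
Proof.
  induction y as [y IH] using lt_wf_ind. intros Hy i Hi.
  destruct (Nat.eq_dec y 1). subst. change (a 1) with 1%Z. lia.
  destruct (block_exists y ltac:(lia)) as [j [J1 [J2 J3]]].
  rewrite (a_rec y j) by auto.
  destruct j as [|[|t]]; try lia. pose proof (fib_SS (S t)) as FS.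
  pose proof (fib_pos (S (S t)) ltac:(lia)).
  destruct (IH (y - fib (S (S t)))%nat ltac:(lia) ltac:(lia) (S t) ltac:(lia)) as [B1 B2].
  assert (Hi3 : (S (S (S t)) <= i)%nat).
  { destruct (le_lt_dec i (S (S t))); [|lia]. pose proof (fib_mono _ _ l). lia. }
  pose proof (fib_mono _ _ Hi3). lia.
Qed.

Lemma phi_sq : phi * phi = phi + 1.
Proof.
  unfold phi. pose proof (sqrt_sqrt 5 ltac:(lra)). nra.
Qed.

Lemma phi_bnd : 1.6 < phi < 1.625.
Proof.
  unfold phi. pose proof (sqrt_sqrt 5 ltac:(lra)). pose proof (sqrt_pos 5). nra.
Qed.

Definition psi := 1 - phi.
Definition delta (j : nat) : R := INR (fib j) * phi - INR (fib (S j)).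

Lemma delta_add j : delta (S (S j)) = delta (S j) + delta j.
Proof.
  unfold delta. rewrite (fib_SS (S j)), (fib_SS j), !plus_INR. ring.
Qed.

Lemma delta_S j : delta (S j) = psi * delta j.
Proof.
  induction j.
  - unfold delta, psi. simpl. ring.
  - rewrite delta_add, IHj. unfold psi.
    replace ((1 - phi) * ((1 - phi) * delta j)) with ((phi*phi - 2*phi + 1) * delta j) by ring.
    rewrite phi_sq. ring.
Qed.

Lemma delta_nz j : delta j <> 0.
Proof.
  induction j. unfold delta; simpl; lra.
  rewrite delta_S. unfold psi. pose proof phi_bnd. intros H0.
  apply Rmult_integral in H0. destruct H0; lra.
Qed.

Lemma delta_abs_S j : Rabs (delta (S j)) < Rabs (delta j).
Proof.
  rewrite delta_S, Rabs_mult. pose proof (Rabs_pos_lt _ (delta_nz j)).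
  unfold psi. pose proof phi_bnd. rewrite Rabs_left by lra. nra.
Qed.

Lemma delta_small j : (2 <= j)%nat -> Rabs (delta j) < 1/2.
Proof.
  intros H. induction H.
  - unfold delta. simpl. pose proof phi_bnd. rewrite Rabs_left; lra.
  - pose proof (delta_abs_S m). lra.
Qed.

Lemma cassini i :
  (Z.of_nat (fib (S i)) * Z.of_nat (fib (S i)) - Z.of_nat (fib i) * Z.of_nat (fib (S (S i))) = 1 \/
   Z.of_nat (fib (S i)) * Z.of_nat (fib (S i)) - Z.of_nat (fib i) * Z.of_nat (fib (S (S i))) = -1)%Z.
Proof.
  induction i.
  - simpl. lia.
  - rewrite (fib_SS (S i)). rewrite (fib_SS i) in *.
    rewrite !Nat2Z.inj_add in *.
    set (u := Z.of_nat (fib i)) in *. set (v := Z.of_nat (fib (S i))) in *.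
    assert (E : ((v+u)*(v+u) - v*((v+u)+v) = -(v*v - u*(v+u)))%Z) by ring. lia.
Qed.

Lemma BA j m p : (2 <= j)%nat -> (1 <= m)%nat -> (m < fib (S j))%nat -> m <> fib j ->
  Rabs (phi * INR m - IZR p) > Rabs (delta j).
Proof.
  intros Hj Hm1 Hm2 Hm3. destruct j as [|i]; [lia|].
  pose proof (cassini i) as C.
  pose proof (fib_SS i) as FS. pose proof (fib_pos i ltac:(lia)) as Fp.
  pose proof (fib_le_S i) as Fle.
  set (F0 := Z.of_nat (fib i)) in *. set (F1 := Z.of_nat (fib (S i))) in *.
  set (F2 := Z.of_nat (fib (S (S i)))) in *.
  set (c := (F1*F1 - F0*F2)%Z).
  assert (Hcc : (c*c = 1)%Z) by (destruct C as [C|C]; unfold c; rewrite C; reflexivity).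
  set (M := Z.of_nat m).
  set (x := (c*(M*F1 - p*F0))%Z). set (y := (c*(p*F1 - M*F2))%Z).
  assert (HM : M = (x*F1 + y*F0)%Z).
  { transitivity (M*(c*c))%Z. rewrite Hcc; ring. unfold x, y, c. ring. }
  assert (HP : p = (x*F2 + y*F1)%Z).
  { transitivity (p*(c*c))%Z. rewrite Hcc; ring. unfold x, y, c. ring. }
  assert (Hreal : phi * INR m - IZR p = IZR x * delta (S i) + IZR y * delta i).
  { unfold delta. rewrite !INR_IZR_INZ. fold M F0 F1 F2. rewrite HP, HM.
    rewrite !plus_IZR, !mult_IZR. ring. }
  rewrite Hreal, delta_S.
  assert (Hcase : ((1 <= x /\ y <= -1) \/ (x <= -1 /\ 1 <= y) \/ (x = 0 /\ 1 <= y))%Z).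
  { assert (F2e : F2 = (F1 + F0)%Z) by (unfold F2, F1, F0; lia).
    assert (B1 : (1 <= M)%Z) by (unfold M; lia).
    assert (B2 : (M < F2)%Z) by (unfold M, F2; lia).
    assert (B3 : M <> F1) by (unfold M, F1; lia).
    assert (F0p : (1 <= F0)%Z) by (unfold F0; lia).
    assert (F10 : (F0 <= F1)%Z) by (unfold F0, F1; lia).
    clearbody x y M F0 F1 F2.
    destruct (Z.lt_trichotomy x 0) as [X|[X|X]];
    destruct (Z.lt_trichotomy y 0) as [Y|[Y|Y]]; subst; try nia.
    destruct (Z.eq_dec x 1). subst. lia. nia. }
  pose proof (Rabs_pos_lt _ (delta_nz i)) as Dp.
  replace (IZR x * (psi * delta i) + IZR y * delta i) with (delta i * (IZR x * psi + IZR y)) by ring.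
  rewrite !Rabs_mult.
  assert (Rabs (IZR x * psi + IZR y) > Rabs psi).
  { unfold psi. pose proof phi_bnd. rewrite (Rabs_left (1 - phi)) by lra.
    destruct Hcase as [[X Y]|[[X Y]|[X Y]]].
    - apply IZR_le in X. apply IZR_le in Y. rewrite Rabs_left by nra. nra.
    - apply IZR_le in X. apply IZR_le in Y. rewrite Rabs_right by nra. nra.
    - rewrite X, Rmult_0_l, Rplus_0_l. apply IZR_le in Y. rewrite Rabs_right by lra. lra. }
  rewrite Rmult_comm. apply Rmult_lt_compat_r; lra.
Qed.

Lemma floor_spec x : IZR (floorR x) <= x < IZR (floorR x) + 1.
Proof. unfold floorR. pose proof (base_Int_part x). lra. Qed.

Lemma floor_unique x z : IZR z <= x < IZR z + 1 -> floorR x = z.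
Proof.
  intros H. pose proof (floor_spec x).
  assert (A : (z < floorR x + 1)%Z) by (apply lt_IZR; rewrite plus_IZR; lra).
  assert (B : (floorR x < z + 1)%Z) by (apply lt_IZR; rewrite plus_IZR; lra).
  lia.
Qed.

Definition L (m : nat) : Z := floorR (phi * INR m).

Lemma L_spec m : IZR (L m) <= phi * INR m < IZR (L m) + 1.
Proof. apply floor_spec. Qed.

Lemma ADD j m : (2 <= j)%nat -> (1 <= m)%nat -> (m < fib (S j))%nat ->
  L (m + fib j) = (L m + Z.of_nat (fib (S j)))%Z.
Proof.
  intros Hj Hm1 Hm2. unfold L at 1. apply floor_unique.
  assert (E : phi * INR (m + fib j) = phi * INR m + IZR (Z.of_nat (fib (S j))) + delta j).
  { unfold delta. rewrite plus_INR, <- INR_IZR_INZ. ring. }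
  rewrite E, plus_IZR. pose proof (L_spec m) as Sm.
  set (p := L m) in *. set (F := Z.of_nat (fib (S j))) in *.
  pose proof (delta_small j Hj) as Ds. pose proof (delta_nz j) as Dn.
  destruct (Nat.eq_dec m (fib j)) as [Em|Em].
  - assert (Ef : phi * INR m = IZR F + delta j).
    { unfold delta, F. rewrite <- INR_IZR_INZ, Em. ring. }
    rewrite Ef in *.
    destruct (Rlt_dec 0 (delta j)) as [Dp|Dp].
    + rewrite Rabs_right in Ds by lra.
      assert (A : (p < F + 1)%Z) by (apply lt_IZR; rewrite plus_IZR; lra).
      assert (B : (F < p + 1)%Z) by (apply lt_IZR; rewrite plus_IZR; lra).
      assert (p = F) by lia. subst p. rewrite H. lra.
    + assert (delta j < 0) by lra. rewrite Rabs_left in Ds by lra.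
      assert (A : (p < F)%Z) by (apply lt_IZR; lra).
      assert (B : (F < p + 2)%Z) by (apply lt_IZR; rewrite plus_IZR; lra).
      assert (IZR p = IZR F - 1) by (replace p with (F - 1)%Z by lia; rewrite minus_IZR; lra).
      lra.
  - pose proof (BA j m p Hj Hm1 Hm2 Em) as B1.
    pose proof (BA j m (p + 1) Hj Hm1 Hm2 Em) as B2.
    rewrite plus_IZR in B2.
    rewrite (Rabs_right (phi * INR m - IZR p)) in B1 by lra.
    rewrite (Rabs_left (phi * INR m - (IZR p + 1))) in B2 by lra.
    pose proof (Rle_abs (delta j)). pose proof (Rle_abs (- delta j)).
    rewrite Rabs_Ropp in H0. lra.
Qed.

Lemma irr k : (1 <= k)%nat -> forall p, phi * INR k <> IZR p.
Proof.
  intros Hk p E. pose proof (fib_ge k) as G. pose proof (fib_le_S (S (S k))) as G2.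
  pose proof (BA (S (S k)) k p ltac:(lia) Hk ltac:(lia) ltac:(lia)) as B.
  rewrite E, Rminus_diag, Rabs_R0 in B. pose proof (Rabs_pos (delta (S (S k)))). lra.
Qed.

Lemma L_strict k : (1 <= k)%nat -> IZR (L k) < phi * INR k.
Proof.
  intros Hk. pose proof (L_spec k). pose proof (irr k Hk (L k)). lra.
Qed.

Lemma dL_range m : (L (S m) = L m + 1 \/ L (S m) = L m + 2)%Z.
Proof.
  pose proof (L_spec m). pose proof (L_spec (S m)). rewrite S_INR in H0.
  pose proof phi_bnd.
  assert (A : (L m < L (S m))%Z) by (apply lt_IZR; lra).
  assert (B : (L (S m) < L m + 3)%Z) by (apply lt_IZR; rewrite plus_IZR; lra).
  lia.
Qed.

Lemma INR_Z k : (0 <= k)%Z -> INR (Z.to_nat k) = IZR k.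
Proof. intros H. rewrite INR_IZR_INZ, Z2Nat.id by lia. reflexivity. Qed.

Lemma LB m : (1 <= m)%nat ->
  ((exists k, (1 <= k)%nat /\ L k = Z.of_nat m) <-> L (S m) = (L m + 2)%Z).
Proof.
  intros Hm. pose proof phi_sq as P2. pose proof phi_bnd as Pb.
  pose proof (L_spec m) as Sm. pose proof (L_spec (S m)) as SSm. rewrite S_INR in SSm.
  assert (Mp : 1 <= INR m) by (apply (le_INR 1); lia).
  rewrite INR_IZR_INZ in *. set (M := Z.of_nat m) in *.
  split.
  - intros [k [Hk Ek]]. pose proof (L_spec k) as Sk. pose proof (L_strict k Hk) as Sk2.
    rewrite Ek in Sk, Sk2. rewrite INR_IZR_INZ in *. set (K := Z.of_nat k) in *.
    assert (H1 : IZR M * phi < IZR M + IZR K) by nra.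
    assert (H2 : (IZR M + 1) * phi > IZR M + 1 + IZR K) by nra.
    assert (A : (L m < M + K)%Z) by (apply lt_IZR; rewrite plus_IZR; lra).
    assert (B : (M + K < L (S m))%Z) by (apply lt_IZR; rewrite plus_IZR; lra).
    pose proof (dL_range m). lia.
  - intros E. set (k := (L (S m) - M - 1)%Z).
    assert (Ek : IZR k = IZR (L (S m)) - IZR M - 1) by (unfold k; rewrite !minus_IZR; ring).
    assert (Em : IZR (L m) = IZR (L (S m)) - 2) by (rewrite E, plus_IZR; ring).
    assert (H1 : IZR k * phi <= IZR M + 1) by nra.
    assert (H2 : IZR k * phi > IZR M) by nra.
    assert (Kp : (1 <= k)%Z) by (assert (0 < k)%Z by (apply lt_IZR; nra); lia).
    exists (Z.to_nat k). split. lia.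
    unfold L. apply floor_unique. rewrite INR_Z by lia.
    assert (phi * IZR k <> IZR (M + 1)).
    { rewrite <- (INR_Z k) by lia. apply irr. lia. }
    rewrite plus_IZR in H. lra.
Qed.

Lemma UB m : (1 <= m)%nat ->
  ((exists k, (1 <= k)%nat /\ (L k + Z.of_nat k = Z.of_nat m)%Z) <-> L (S m) = (L m + 1)%Z).
Proof.
  intros Hm. pose proof phi_sq as P2. pose proof phi_bnd as Pb.
  assert (P3 : (phi + 1) * (2 - phi) = 1) by nra.
  pose proof (L_spec m) as Sm. pose proof (L_spec (S m)) as SSm. rewrite S_INR in SSm.
  assert (Mp : 1 <= INR m) by (apply (le_INR 1); lia).
  rewrite INR_IZR_INZ in *. set (M := Z.of_nat m) in *.
  split.
  - intros [k [Hk Ek]]. pose proof (L_spec k) as Sk. pose proof (L_strict k Hk) as Sk2.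
    rewrite INR_IZR_INZ in *. set (K := Z.of_nat k) in *.
    assert (Lk : IZR (L k) = IZR M - IZR K) by (rewrite <- Ek, plus_IZR; ring).
    rewrite Lk in Sk, Sk2.
    assert (H1 : IZR M * (2 - phi) < IZR K) by nra.
    assert (H2 : (IZR M + 1) * (2 - phi) > IZR K) by nra.
    assert (A : (2 * M - K <= L m)%Z).
    { assert (2 * M - K - 1 < L m)%Z; [|lia]. apply lt_IZR. rewrite !minus_IZR, mult_IZR. lra. }
    assert (B : (L (S m) < 2 * M + 2 - K)%Z).
    { apply lt_IZR. rewrite !minus_IZR, plus_IZR, mult_IZR. lra. }
    pose proof (dL_range m). lia.
  - intros E. set (k := (2 * M - L m)%Z).
    assert (Ek : IZR k = 2 * IZR M - IZR (L m)) by (unfold k; rewrite minus_IZR, mult_IZR; ring).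
    assert (Em : IZR (L (S m)) = IZR (L m) + 1) by (rewrite E, plus_IZR; ring).
    assert (H1 : IZR k * (phi + 1) >= IZR M) by nra.
    assert (H2 : IZR k * (phi + 1) < IZR M + 1) by nra.
    assert (Kp : (1 <= k)%Z) by (assert (0 < k)%Z by (apply lt_IZR; nra); lia).
    exists (Z.to_nat k). split. lia.
    assert (Lk : L (Z.to_nat k) = (M - k)%Z).
    { unfold L. apply floor_unique. rewrite INR_Z by lia.
      assert (phi * IZR k <> IZR (M - k)).
      { rewrite <- (INR_Z k) by lia. apply irr. lia. }
      rewrite minus_IZR in *. lra. }
    rewrite Lk, Z2Nat.id by lia. ring.
Qed.

Lemma L_val1 : L 1 = 1%Z.
Proof. unfold L. apply floor_unique. pose proof phi_bnd. simpl. lra. Qed.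
Lemma L_val2 : L 2 = 3%Z.
Proof. unfold L. apply floor_unique. pose proof phi_bnd. simpl. lra. Qed.
Lemma L_val3 : L 3 = 4%Z.
Proof. unfold L. apply floor_unique. pose proof phi_bnd. simpl. lra. Qed.

Lemma main_eq n : a n = a (S n) <-> L (S (S n)) = (L (S n) + 1)%Z.
Proof.
  induction n as [n IH] using lt_wf_ind.
  destruct (Nat.eq_dec n 0) as [->|N0].
  { change (a 0) with 0%Z. change (a 1) with 1%Z. rewrite L_val1, L_val2. split; intros; lia. }
  destruct (Nat.eq_dec n 1) as [->|N1].
  { assert (a 2 = 1%Z) by reflexivity. change (a 1) with 1%Z. rewrite H, L_val2, L_val3.
    split; intros; lia. }
  destruct (block_exists n ltac:(lia)) as [j [J1 [J2 J3]]].
  pose proof (fib_pos j ltac:(lia)) as Fp.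
  destruct (Nat.eq_dec n (fib (S j))) as [En|En].
  -
    assert (LHS : a n <> a (S n)).
    { rewrite (a_rec n j) by auto.
      rewrite (a_rec (S n) (S j)); try lia.
      2:{ rewrite fib_SS. lia. }
      replace (S n - fib (S j))%nat with 1%nat by lia. change (a 1) with 1%Z.
      assert (fib (S j) <= fib j + fib j)%nat by
        (destruct j as [|j']; [lia| rewrite fib_SS; pose proof (fib_le_S j'); lia]).
      destruct (a_bounds (n - fib j) ltac:(lia) j ltac:(lia)) as [B1 B2].
      rewrite fib_SS. lia. }
    assert (F4 : (3 <= fib (S (S j)))%nat).
    { pose proof (fib_mono 4 (S (S j)) ltac:(lia)) as HH. change (fib 4) with 3%nat in HH. lia. }
    pose proof (ADD (S j) 1 ltac:(lia) ltac:(lia) ltac:(lia)) as A1.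
    pose proof (ADD (S j) 2 ltac:(lia) ltac:(lia) ltac:(lia)) as A2.
    replace (1 + fib (S j))%nat with (S n) in A1 by lia.
    replace (2 + fib (S j))%nat with (S (S n)) in A2 by lia.
    rewrite A1, A2, L_val1, L_val2. split; intros; [contradiction|lia].
  - set (n' := (n - fib j)%nat).
    assert (Hj3 : (3 <= j)%nat).
    { destruct (Nat.eq_dec j 2); [subst; simpl in *; lia|lia]. }
    assert (F3 : (2 <= fib j)%nat) by (pose proof (fib_mono 3 j Hj3) as HH; change (fib 3) with 2%nat in HH; lia).
    destruct j as [|[|t]]; try lia.
    pose proof (fib_SS (S t)) as FS.
    rewrite (a_rec n (S (S t))) by lia. rewrite (a_rec (S n) (S (S t))) by lia.
    replace (S n - fib (S (S t)))%nat with (S n') by (unfold n'; lia).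
    fold n'.
    assert (IHn : a n' = a (S n') <-> L (S (S n')) = (L (S n') + 1)%Z) by (apply IH; unfold n'; lia).
    pose proof (ADD (S (S t)) (S n') ltac:(lia) ltac:(lia) ltac:(unfold n'; lia)) as A1.
    pose proof (ADD (S (S t)) (S (S n')) ltac:(lia) ltac:(lia) ltac:(unfold n'; lia)) as A2.
    replace (S n' + fib (S (S t)))%nat with (S n) in A1 by (unfold n'; lia).
    replace (S (S n') + fib (S (S t)))%nat with (S (S n)) in A2 by (unfold n'; lia).
    rewrite A1, A2. split; intros.
    + assert (a n' = a (S n')) by lia. apply IHn in H0. lia.
    + assert (L (S (S n')) = (L (S n') + 1)%Z) by lia. apply IHn in H0. lia.
Qed.

Lemma floor_add_int x z : floorR (x + IZR z) = (floorR x + z)%Z.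
Proof.
  apply floor_unique. pose proof (floor_spec x). rewrite plus_IZR. lra.
Qed.

Lemma floor_phi2 k : floorR (phi ^ 2 * INR k) = (L k + Z.of_nat k)%Z.
Proof.
  unfold L. rewrite <- floor_add_int. f_equal. rewrite <- INR_IZR_INZ.
  replace (phi ^ 2) with (phi * phi) by ring. rewrite phi_sq. ring.
Qed.

Lemma L_nonneg k : (0 <= L k)%Z.
Proof.
  pose proof (L_spec k). pose proof (pos_INR k). pose proof phi_bnd.
  assert (-1 < L k)%Z; [|lia]. apply lt_IZR. nra.
Qed.

Lemma L_lt i j : (i < j)%nat -> (L i < L j)%Z.
Proof.
  induction 1; pose proof (dL_range i); try pose proof (dL_range m); lia.
Qed.

Lemma L_le i j : (i <= j)%nat -> (L i <= L j)%Z.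
Proof.
  intros H. destruct (Nat.eq_dec i j). subst; lia. pose proof (L_lt i j ltac:(lia)). lia.
Qed.

Theorem proposition9 :
  (forall n : nat,
     a n = a (S n) <->
     exists k : nat, (1 <= k)%nat /\
       Z.of_nat n = (floorR (phi ^ 2 * INR k) - 1)%Z)
  /\
  (forall n : nat,
     a n <> a (S n) <->
     exists k : nat, Z.of_nat n = floorR (phi * INR k + 1 / phi))
  /\
  (forall n : nat, (1 <= n)%nat ->
     (a n <> a (n - 1)%nat /\ a n <> a (S n)) <->
     exists k : nat, (1 <= k)%nat /\
       Z.of_nat n = floorR (phi * IZR (floorR (phi ^ 2 * INR k)))).
Proof.
  split; [|split].
  - intros n. rewrite main_eq, <- (UB (S n)) by lia. split.
    + intros [k [Hk E]]. exists k. split; auto. rewrite floor_phi2. lia.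
    + intros [k [Hk E]]. exists k. split; auto. rewrite floor_phi2 in E. lia.
  - intros n. rewrite main_eq.
    assert (Hb : L (S (S n)) = (L (S n) + 2)%Z <->
                 exists k, Z.of_nat n = floorR (phi * INR k + 1 / phi)).
    { rewrite <- (LB (S n)) by lia.
      assert (Ef : forall k, floorR (phi * INR k + 1 / phi) = (L (S k) - 1)%Z).
      { intros k. unfold L. replace (floorR (phi * INR (S k)) - 1)%Z with (floorR (phi * INR (S k)) + (-1))%Z by lia. rewrite <- floor_add_int. f_equal.
        pose proof phi_sq. pose proof phi_bnd. rewrite S_INR.
        assert (Ei : / phi = phi - 1) by (apply Rmult_eq_reg_l with phi; [rewrite Rinv_r by lra; nra | lra]).
        unfold Rdiv. rewrite Rmult_1_l, Ei. simpl. ring. }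
      split.
      + intros [k [Hk E]]. exists (k - 1)%nat. rewrite Ef.
        replace (S (k - 1)) with k by lia. lia.
      + intros [k E]. exists (S k). split. lia. rewrite Ef in E. lia. }
    rewrite <- Hb. pose proof (dL_range (S n)). split; intros; lia.
  - intros n Hn. destruct n as [|n0]; [lia|]. replace (S n0 - 1)%nat with n0 by lia.
    assert (E1 : a (S n0) <> a n0 <-> L (S (S n0)) = (L (S n0) + 2)%Z).
    { pose proof (main_eq n0). pose proof (dL_range (S n0)).
      split; intros. destruct H0; auto. exfalso. apply H1. symmetry. apply H. auto.
      intro. symmetry in H2. apply H in H2. lia. }
    assert (E2 : a (S n0) <> a (S (S n0)) <-> L (S (S (S n0))) = (L (S (S n0)) + 2)%Z).
    { pose proof (main_eq (S n0)). pose proof (dL_range (S (S n0))).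
      split; intros. destruct H0; auto. exfalso. apply H1. apply H. auto.
      intro. apply H in H2. lia. }
    rewrite E1, E2. clear E1 E2. set (n := S n0) in *.
    assert (Ec : forall k, floorR (phi * IZR (floorR (phi ^ 2 * INR k))) =
                           L (Z.to_nat (L k) + k)).
    { intros k. rewrite floor_phi2. unfold L at 2. f_equal. f_equal.
      rewrite plus_INR, INR_Z by apply L_nonneg. rewrite plus_IZR, <- INR_IZR_INZ. reflexivity. }
    split.
    + intros [H1 H2].
      apply (LB n ltac:(unfold n; lia)) in H1. destruct H1 as [k [Hk Ek]].
      apply (LB (S n) ltac:(lia)) in H2. destruct H2 as [k' [Hk' Ek']].
      assert (k' = S k).
      { destruct (le_lt_dec k' k). pose proof (L_le _ _ l). lia.
        destruct (Nat.eq_dec k' (S k)); auto.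
        pose proof (L_le (S (S k)) k' ltac:(lia)). pose proof (L_lt k (S k) ltac:(lia)).
        pose proof (L_lt (S k) (S (S k)) ltac:(lia)). lia. }
      subst k'. assert (L (S k) = (L k + 1)%Z) by lia.
      apply (UB k Hk) in H. destruct H as [k2 [Hk2 E2]].
      exists k2. split; auto. rewrite Ec. pose proof (L_nonneg k2).
      replace (Z.to_nat (L k2) + k2)%nat with k by lia. lia.
    + intros [k [Hk E]]. rewrite Ec in E. set (u := (Z.to_nat (L k) + k)%nat) in *.
      assert (Hu : L (S u) = (L u + 1)%Z).
      { apply (UB u ltac:(unfold u; lia)). exists k. split; auto. unfold u.
        pose proof (L_nonneg k). lia. }
      split.
      * apply (LB n ltac:(unfold n; lia)). exists u. split. unfold u; lia. auto.
      * apply (LB (S n) ltac:(lia)). exists (S u). split. lia. rewrite Hu, <- E. lia.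
Qed.
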